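(* In the truncated Gale–Shapley algorithm described in the context, with a weight function $w$ respecting the preferences, for every $i\ge 2$ we have $f_i(R)\le f_{i-1}(R)$.
   Context: Instance: a simple bipartite graph $\mathcal{G}=(R\cup B,E)$ (red nodes $R$, blue nodes $B$) without isolated nodes, each node having a linear preference order on its neighbours. Algorithm (distributed Gale–Shapley): each blue $b$ keeps $p(b)$ (current partner or $\bot$), initially $\bot$. Each red $r$ keeps a list $C(r)$, initially all neighbours in decreasing preference; $c(r)$ (candidate awaiting response, or $\bot$), initially $\bot$; $p(r)$ (partner or $\bot$), initially $\bot$. Each round consists of a blue turn then a red turn. Blue turn, for each $b$: let $P$ be the set of neighbours that sent `propose'; if $P=\emptyset$ do nothing. Otherwise let $Q=P\cup\{p(b)\}$ if $p(b)\ne\bot$, else $Q=P$; let $q$ be $b$'s most preferred node in $Q$; if $q\ne p(b)$, send `break' to $p(b)$ (if $p(b)\ne\bot$), send `accept' to $q$, and set $p(b)\gets q$; send `reject' to every $r\in P\setminus\{q\}$. Red turn, for each $r$: (1) if $c(r)\neq\bot$, receive the message from $c(r)$; if `accept' set $p(r)\gets c(r)$; if `reject' remove $c(r)$ from $C(r)$; then set $c(r)\gets\bot$. (2) If $p(r)\ne\bot$ and $p(r)$ sent `break', remove $p(r)$ from $C(r)$ and set $p(r)\gets\bot$. (3) If $p(r)=\bot$ and $C(r)$ is nonempty, set $c(r)$ to the first element of $C(r)$ and send `propose' to it. Notation: a subscript $i$ denotes the value at the end of round $i$. Let $w:E\to\mathbb{Z}_{>0}$ be a weight function respecting preferences: whenever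 a node $v$ prefers $x$ over $y$, $w(\{v,x\})\ge w(\{v,y\})$. The potential of $r\in R$ at the end of round $i$ is $f_i(r)=0$ if $r$ is matched ($p_i(r)\neq\bot$) or $C_i(r)$ is empty, and otherwise $f_i(r)=w(\{r,b\})$ where $b$ is the first element of $C_i(r)$; $f_i(R)=\sum_{r\in R}f_i(r)$. *)

(* Defs.v *)
From mathcomp Require Import all_boot.
Set Implicit Arguments. Unset Strict Implicit. Unset Printing Implicit Defensive.

Section GS.
Variables (R B : finType).

(* Preferences: [prefR r] lists the neighbours of red r in decreasing
   preference; [prefB b] lists the neighbours of blue b in decreasing
   preference.  "v prefers x over y" means x comes before y in the list. *)
Definition prefers (T : eqType) (s : seq T) (x y : T) : bool :=
  [&& x \in s, y \in s & index x s < index y s].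

Record state := State {
  pB : B -> option R;
  Cr : R -> seq B;
  cr : R -> option B;
  pR : R -> option B
}.

Definition init_state (prefR : R -> seq B) : state :=
  State (fun _ => None) prefR (fun _ => None) (fun _ => None).

(* Reds that sent 'propose' to b (in the red turn of the previous round). *)
Definition proposers (s : state) (b : B) : {set R} := [set r | cr s r == Some b].

Definition Qset (s : state) (b : B) : {set R} :=
  if pB s b is Some r0 then r0 |: proposers s b else proposers s b.

Definition best (prefB : B -> seq R) (s : state) (b : B) : option R :=
  [pick r in Qset s b |
     [forall r' in Qset s b, index r (prefB b) <= index r' (prefB b)]].

Definition newpB prefB (s : state) (b : B) : option R :=
  if proposers s b == set0 then pB s b
  else if best prefB s b != pB s b then best prefB s b else pB s b.

Definition accept_msg prefB (s : state) (b : B) (r : R) : bool :=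
  [&& proposers s b != set0, best prefB s b == Some r & best prefB s b != pB s b].

Definition reject_msg prefB (s : state) (b : B) (r : R) : bool :=
  (r \in proposers s b) && (best prefB s b != Some r).

Definition break_msg prefB (s : state) (b : B) (r : R) : bool :=
  [&& proposers s b != set0, best prefB s b != pB s b & pB s b == Some r].

(* Red turn, for a single red r: returns (C(r), c(r), p(r)). *)
Definition red_step prefB (s : state) (r : R) : seq B * option B * option B :=
  let '(p1, C1) :=
    match cr s r with
    | Some b =>
        (if accept_msg prefB s b r then Some b else pR s r,
         if reject_msg prefB s b r then filter (predC1 b) (Cr s r) else Cr s r)
    | None => (pR s r, Cr s r)
    end in
  let '(p2, C2) :=
    match p1 with
    | Some b' => if break_msg prefB s b' r then (None, filter (predC1 b') C1)
                 else (p1, C1)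
    | None => (p1, C1)
    end in
  let c3 := if p2 is None then ohead C2 else None in
  (C2, c3, p2).

Definition round prefB (s : state) : state :=
  State (newpB prefB s)
        (fun r => (red_step prefB s r).1.1)
        (fun r => (red_step prefB s r).1.2)
        (fun r => (red_step prefB s r).2).

Definition run prefR prefB (i : nat) : state := iter i (round prefB) (init_state prefR).

Definition pot (w : R -> B -> nat) (s : state) (r : R) : nat :=
  if pR s r is Some _ then 0 else if Cr s r is b :: _ then w r b else 0.

Definition potR (w : R -> B -> nat) (s : state) : nat := \sum_(r : R) pot w s r.

Definition respects (adj : R -> B -> bool) prefR prefB (w : R -> B -> nat) : Prop :=
  (forall r b, adj r b -> 0 < w r b) /\
  (forall r x y, prefers (prefR r) x y -> w r y <= w r x) /\
  (forall b x y, prefers (prefB b) x y -> w y b <= w x b).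

End GS.

(* Main.v *)
Require Import Defs.
From mathcomp Require Import all_boot.
Set Implicit Arguments. Unset Strict Implicit. Unset Printing Implicit Defensive.

Lemma subseq_head_index (T : eqType) (s : seq T) b rest x :
  uniq s -> subseq (b :: rest) s -> x \in rest -> prefers s b x.
Proof.
elim: s => [|y s IH] Hu Hsub xr; first by [].
have Hb : b \in y :: s := mem_subseq Hsub (mem_head _ _).
have Hx : x \in y :: s := mem_subseq Hsub (@mem_behead _ (b :: rest) _ xr).
move: Hu Hsub => /= /andP[ys us] Hsub.
rewrite /prefers Hb Hx /=.
move: Hsub; case: eqP => [E|nby] Hsub; first subst y.
- have xs : x \in s := mem_subseq Hsub xr.
  have : x != b.
    apply/eqP=> E. rewrite E in xs. rewrite xs in ys. by [].
  by rewrite eqxx eq_sym => /negbTE ->.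
- have xs : x \in s := mem_subseq Hsub (@mem_behead _ (b :: rest) _ xr).
  have : x != y.
    apply/eqP=> E. rewrite E in xs. rewrite xs in ys. by [].
  rewrite eq_sym => /negbTE ->.
  have -> : (y == b) = false by apply/eqP => E; apply: nby.
  rewrite ltnS.
  by have := IH us Hsub xr; rewrite /prefers => /and3P[_ _].
Qed.

Section Main.
Variables (R B : finType) (adj : R -> B -> bool) (prefR : R -> seq B) (prefB : B -> seq R) (w : R -> B -> nat).
Hypotheses (HuR : forall r, uniq (prefR r)) (HmR : forall r b, (b \in prefR r) = adj r b)
  (HuB : forall b, uniq (prefB b)) (HmB : forall b r, (r \in prefB b) = adj r b)
  (Hw : respects adj prefR prefB w).

Definition Inv (s : state R B) :=
  [/\ forall r, subseq (Cr s r) (prefR r),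
      forall r b, cr s r = Some b -> pR s r = None /\ ohead (Cr s r) = Some b,
      forall r b, pR s r = Some b -> ohead (Cr s r) = Some b &
      forall b r, pB s b = Some r -> adj r b].

Lemma best_spec s b r : best prefB s b = Some r ->
  r \in Qset s b /\ forall r', r' \in Qset s b -> index r (prefB b) <= index r' (prefB b).
Proof.
rewrite /best; case: pickP => // x /andP[Hx /forall_inP H] [<-]; split => //.
Qed.

Lemma best_some s b : proposers s b != set0 -> exists r, best prefB s b = Some r.
Proof.
move=> /set0Pn [x Hx].
have HxQ : x \in Qset s b by rewrite /Qset; case: (pB s b) => [r0|] //; rewrite inE Hx orbT.
rewrite /best; case: pickP => [y _|H]; first by exists y.
exfalso.
case: (arg_minnP (fun r => index r (prefB b)) HxQ) => m Hm Hmin.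
have Hm' : m \in Qset s b := Hm.
move: (H m) => /=; rewrite Hm' /=.
suff -> : [forall (r' | r' \in Qset s b), index m (prefB b) <= index r' (prefB b)] by [].
by apply/forall_inP => r' Hr'; apply: Hmin; exact: Hr'.
Qed.

Variant rs_spec s r : seq B * option B * option B -> Type :=
| RsMatchBreak b0 of pR s r = Some b0 & cr s r = None & break_msg prefB s b0 r :
    rs_spec s r (filter (predC1 b0) (Cr s r), ohead (filter (predC1 b0) (Cr s r)), None)
| RsMatchKeep b0 of pR s r = Some b0 & cr s r = None & ~~ break_msg prefB s b0 r :
    rs_spec s r (Cr s r, None, Some b0)
| RsIdle of pR s r = None & cr s r = None : rs_spec s r (Cr s r, ohead (Cr s r), None)
| RsAccept b of pR s r = None & cr s r = Some b & accept_msg prefB s b r :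
    rs_spec s r (Cr s r, None, Some b)
| RsReject b of pR s r = None & cr s r = Some b & ~~ accept_msg prefB s b r :
    rs_spec s r (if reject_msg prefB s b r then filter (predC1 b) (Cr s r) else Cr s r,
                 ohead (if reject_msg prefB s b r then filter (predC1 b) (Cr s r) else Cr s r), None).

Lemma rsP s r : (forall b, cr s r = Some b -> pR s r = None) -> rs_spec s r (red_step prefB s r).
Proof.
move=> Hc; rewrite /red_step.
case Ec: (cr s r) => [b|].
- have Ep := Hc _ Ec.
  case Ea: (accept_msg prefB s b r).
  + have Er : reject_msg prefB s b r = false.
      by move: Ea; rewrite /accept_msg /reject_msg => /and3P[_ /eqP -> _]; rewrite eqxx andbF.
    have Eb : break_msg prefB s b r = false.
      move: Ea; rewrite /accept_msg /break_msg => /and3P[_ /eqP E1 E2].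
      by apply/negbTE; rewrite negb_and; apply/orP; right; rewrite negb_and; apply/orP; right;
         apply: contra E2 => /eqP ->; rewrite E1.
    rewrite Er Eb; exact: RsAccept.
  + rewrite Ep; exact: RsReject (negbT Ea).
- case Ep: (pR s r) => [b0|].
  + case Eb: (break_msg prefB s b0 r); [exact: RsMatchBreak | exact: RsMatchKeep (negbT Eb)].
  + exact: RsIdle.
Qed.


Lemma Inv_init : Inv (init_state prefR).
Proof. by split => //= r; exact: subseq_refl. Qed.

Lemma Inv_round s : Inv s -> Inv (round prefB s).
Proof.
case=> I1 I2 I3 I4.
have Hc : forall r b, cr s r = Some b -> pR s r = None by move=> r b /I2 [].
split.
- move=> r /=; case: (rsP (Hc r)) => [b0 _ _ _|b0 _ _ _| _ _|b _ _ _|b _ _ _].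
  + exact: subseq_trans (filter_subseq _ _) (I1 r).
  + exact: I1.
  + exact: I1.
  + exact: I1.
  + case: ifP => _; last exact: I1.
    exact: subseq_trans (filter_subseq _ _) (I1 r).
- move=> r b /=; case: (rsP (Hc r)) => //.
- move=> r b /=; case: (rsP (Hc r)) => //.
  + by move=> b0 Ep _ _ [<-]; exact: I3.
  + by move=> b1 _ Ec _ [<-]; have [] := I2 _ _ Ec.
- move=> b r /=; rewrite /newpB.
  have Hbest : best prefB s b = Some r -> adj r b.
    case/best_spec => + _; rewrite /Qset.
    have Hprop : r \in proposers s b -> adj r b.
      rewrite inE => /eqP /I2 [_]; case E: (Cr s r) => [|x C] //= [<-].
      by rewrite -HmR; apply: (mem_subseq (I1 r)); rewrite E mem_head.
    case E: (pB s b) => [r0|]; last exact: Hprop.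
    rewrite in_setU1 => /orP[/eqP ->|]; [exact: I4 | exact: Hprop].
  case: ifP => _; first exact: I4.
  case: ifP => _; [exact: Hbest | exact: I4].
Qed.

Lemma Inv_run i : Inv (run prefR prefB i).
Proof.
elim: i => [|i IH]; first exact: Inv_init.
by rewrite /run iterS; apply: Inv_round.
Qed.


Definition hh (s : state R B) (r : R) : R :=
  match pR s r with
  | Some b0 => if break_msg prefB s b0 r then
                 (if best prefB s b0 is Some r' then r' else r) else r
  | None => match cr s r with
           | Some b => if pB s b is Some r0 then
                         (if [&& break_msg prefB s b r0, best prefB s b == Some r
                               & pR s r0 == Some b] then r0 else r) else r
           | None => r end
  end.

Lemma best_partner s b0 r r' : Inv s -> pB s b0 = Some r -> break_msg prefB s b0 r ->
  best prefB s b0 = Some r' -> [/\ r' != r, cr s r' = Some b0 & pR s r' = None].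
Proof.
case=> I1 I2 I3 I4 Ep Hb Ebest.
have Hne : r' != r.
  apply/eqP => E; subst r'; move: Hb; rewrite /break_msg Ebest Ep eqxx /=.
  by rewrite andbF.
have [HQ _] := best_spec Ebest.
move: HQ; rewrite /Qset Ep in_setU1 (negbTE Hne) /= inE => /eqP Ec.
by split => //; have [] := I2 _ _ Ec.
Qed.

Lemma hh_invol s : Inv s -> cancel (hh s) (hh s).
Proof.
move=> HI r; have [I1 I2 I3 I4] := HI.
rewrite {2}/hh.
case Ep: (pR s r) => [b0|].
- case Eb: (break_msg prefB s b0 r); last by rewrite /hh Ep Eb.
  case Ebest: (best prefB s b0) => [r'|]; last by rewrite /hh Ep Eb Ebest.
  have EpB : pB s b0 = Some r by move: Eb; rewrite /break_msg => /and3P[_ _ /eqP].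
  have [_ Ec Ep'] := best_partner HI EpB Eb Ebest.
  by rewrite /hh Ep' Ec EpB Eb Ebest Ep !eqxx.
- case Ec: (cr s r) => [b|]; last by rewrite /hh Ep Ec.
  case EpB: (pB s b) => [r0|]; last by rewrite /hh Ep Ec EpB.
  case: ifP => [/and3P[Hb /eqP Ebest /eqP Ep0]|Hf]; last by rewrite /hh Ep Ec EpB Hf.
  by rewrite /hh Ep0 Hb Ebest.
Qed.

Lemma w_head r b rest x : subseq (b :: rest) (prefR r) -> x \in rest -> w r x <= w r b.
Proof.
move=> Hs Hx; have [_ [H _]] := Hw; apply: H.
exact: subseq_head_index (HuR r) Hs Hx.
Qed.

Lemma pot_filter r b rest : subseq (b :: rest) (prefR r) ->
  (if [seq x <- b :: rest | predC1 b x] is x :: _ then w r x else 0) <= w r b.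
Proof.
move=> Hs; rewrite /= eqxx /=.
case E: (filter _ rest) => [|x l] //.
have : x \in filter (predC1 b) rest by rewrite E mem_head.
rewrite mem_filter => /andP[_ Hx]; exact: w_head Hs Hx.
Qed.

Lemma pot_step s r : Inv s -> pot w (round prefB s) r <= pot w s (hh s r).
Proof.
move=> HI; have [I1 I2 I3 I4] := HI.
have Hc : forall r b, cr s r = Some b -> pR s r = None by move=> r' b /I2 [].
rewrite /pot /=.
case: (rsP (Hc r)) => [b0 Ep Ec Hb|b0 Ep Ec Hb|Ep Ec|b Ep Ec Ha|b Ep Ec Ha] //=.
- have EpB : pB s b0 = Some r by move: Hb; rewrite /break_msg => /and3P[_ _ /eqP].
  have Hprop : proposers s b0 != set0 by move: Hb; rewrite /break_msg => /and3P[].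
  have [r' Ebest] := best_some Hprop.
  have [Hne Ec' Ep'] := best_partner HI EpB Hb Ebest.
  rewrite /hh Ep Hb Ebest Ep'.
  have [_ HC'] := I2 _ _ Ec'.
  case EC': (Cr s r') HC' => [|y l] //= [Ey]; subst y.
  have := I3 _ _ Ep; case EC: (Cr s r) => [|y rest] //= [Ey]; subst y.
  have Hs := I1 r; rewrite EC in Hs.
  apply: leq_trans (pot_filter Hs) _.
  have [_ [_ H]] := Hw; apply: H.
  have [HQ Hmin] := best_spec Ebest.
  have Hr'in : r' \in prefB b0.
    by rewrite HmB -HmR; apply: (mem_subseq (I1 r')); rewrite EC' mem_head.
  have Hrin : r \in prefB b0 by rewrite HmB; exact: I4 EpB.
  rewrite /prefers Hr'in Hrin /= ltn_neqAle Hmin ?andbT; last by rewrite /Qset EpB in_setU1 eqxx.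
  apply: contra Hne => /eqP Ei.
  by rewrite -(nth_index r Hr'in) Ei (nth_index r Hrin).
- by rewrite /hh Ep Ec Ep; case: (Cr s r).
- rewrite /hh Ep Ec.
  have [_ HC] := I2 _ _ Ec.
  have -> : (if pB s b is Some r0 then
             (if [&& break_msg prefB s b r0, best prefB s b == Some r & pR s r0 == Some b]
              then r0 else r) else r) = r.
    case EpB: (pB s b) => [r0|] //; case: ifP => // /and3P[Hb /eqP Ebest _].
    move/negP: Ha; case; rewrite /accept_msg Ebest eqxx /=.
    by move: Hb; rewrite /break_msg Ebest => /and3P[-> -> _].
  rewrite Ep.
  case EC: (Cr s r) HC => [|y rest] //= [Ey]; subst y.
  have Hs := I1 r; rewrite EC in Hs.
  case: ifP => _; first exact: pot_filter Hs.
  by [].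
Qed.

Lemma potR_round s : Inv s -> potR w (round prefB s) <= potR w s.
Proof.
move=> HI; rewrite /potR [X in _ <= X](reindex_inj (can_inj (hh_invol HI))) /=.
by apply: leq_sum => r _; exact: pot_step.
Qed.

End Main.

Theorem lemma3 (R B : finType) (adj : R -> B -> bool)
  (prefR : R -> seq B) (prefB : B -> seq R) (w : R -> B -> nat) :
  (forall r : R, exists b : B, adj r b) ->
  (forall b : B, exists r : R, adj r b) ->
  (forall r, uniq (prefR r)) -> (forall r b, (b \in prefR r) = adj r b) ->
  (forall b, uniq (prefB b)) -> (forall b r, (r \in prefB b) = adj r b) ->
  respects adj prefR prefB w ->
  forall i : nat, 2 <= i ->
    potR w (run prefR prefB i) <= potR w (run prefR prefB i.-1).
Proof.
move=> _ _ HuR HmR HuB HmB Hw [|i] // _.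
change (potR w (round prefB (run prefR prefB i)) <= potR w (run prefR prefB i)).
apply: (potR_round HuR HmR HmB Hw).
by apply: Inv_run.
Qed.
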